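(* Let $(\mu_n)_{n\ge0}$ be a non-increasing sequence of positive numbers such that $\sum_{n=0}^\infty\mu_n<\infty$. Then the restrictions $H^1_\mu:\ell^1_A\to\ell^1_A$ and $C^1_\mu:\ell^1_A\to\ell^1_A$ of $H_\mu$ and $C_\mu$ are nuclear operators. Moreover, the operator $H_\mu:\ell^\infty_A\to\ell^\infty_A$ satisfies $H_\mu=(H^1_\mu)^*$ and is a compact operator.
   Context: $\ell^p_A$ ($1\le p<\infty$) is the space of $f(z)=\sum_{n\ge0}a_nz^n\in H(\mathbb{D})$ with $\|f\|_p^p=\sum_n|a_n|^p<\infty$, and $\ell^\infty_A$ those with $\|f\|_\infty=\sup_n|a_n|<\infty$; functions are identified with coefficient sequences, so $\ell^\infty_A=(\ell^1_A)^*$ via $\langle x,y\rangle=\sum_nx_ny_n$. $H_\mu:\ell^\infty_A\to\ell^\infty_A$, $H_\mu((a_n)_{n\ge0})=\left(\sum_{n=0}^\infty\mu_{n+k}a_n\right)_{k\ge0}$ and $C_\mu:\ell^\infty_A\to\ell^\infty_A$, $C_\mu((a_n)_{n\ge0})=\left(\mu_k\sum_{n=0}^ka_n\right)_{k\ge0}$. An operator $T:X\to Y$ is nuclear if $T=\sum_nx_n^*(\cdot)y_n$ with $x_n^*\in X^*$, $y_n\in Y$, $\sum_n\|x_n^*\|\|y_n\|<\infty$. *)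

(* Defs.v *)
From Stdlib Require Import Reals.
From Coquelicot Require Import Coquelicot.
Open Scope R_scope.

(* Coefficient sequences of f(z) = sum a_n z^n (complex coefficients). *)
Definition seqC := nat -> C.

(* Sum of a complex series, taken componentwise (meaningful when it converges). *)
Definition Cseries (a : seqC) : C :=
  (Series (fun n => fst (a n)), Series (fun n => snd (a n))).

Definition in_l1 (a : seqC) : Prop := ex_series (fun n => Cmod (a n)).
Definition norm1 (a : seqC) : R := Series (fun n => Cmod (a n)).
Definition in_linf (a : seqC) : Prop := exists M, forall n, Cmod (a n) <= M.
Definition norminf (a : seqC) : R := real (Sup_seq (fun n => Finite (Cmod (a n)))).

Definition pairing (x y : seqC) : C := Cseries (fun n => (x n * y n)%C).

Definition Hmu (mu : nat -> R) (a : seqC) : seqC :=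
  fun k => Cseries (fun n => (RtoC (mu (n + k)%nat) * a n)%C).
Definition Cesmu (mu : nat -> R) (a : seqC) : seqC :=
  fun k => (RtoC (mu k) * sum_n a k)%C.

(* T : ell^1_A -> ell^1_A is nuclear: T = sum_n x_n^*(.) y_n with
   x_n^* in (ell^1_A)^* = ell^infty_A (acting by the pairing), y_n in ell^1_A,
   sum_n ||x_n^*|| ||y_n|| < oo, the series converging in ell^1 norm. *)
Definition nuclear_l1 (T : seqC -> seqC) : Prop :=
  exists (x y : nat -> seqC),
    (forall n, in_linf (x n)) /\ (forall n, in_l1 (y n)) /\
    ex_series (fun n => norminf (x n) * norm1 (y n)) /\
    forall a, in_l1 a ->
      in_l1 (T a) /\
      is_lim_seq
        (fun N => norm1 (fun k => (T a k - sum_n (fun n => (pairing a (x n) * y n k)%C) N)%C))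
        0.

(* S : ell^infty_A -> ell^infty_A is the adjoint of T : ell^1_A -> ell^1_A
   under ell^infty_A = (ell^1_A)^*: <T a, b> = <a, S b>. *)
Definition adjoint_l1_linf (T S : seqC -> seqC) : Prop :=
  (forall b, in_linf b -> in_linf (S b)) /\
  forall a b, in_l1 a -> in_linf b -> pairing (T a) b = pairing a (S b).

Definition compact_linf (Op : seqC -> seqC) : Prop :=
  (forall b, in_linf b -> in_linf (Op b)) /\
  forall (b : nat -> seqC) (M : R), (forall j n, Cmod (b j n) <= M) ->
    exists phi : nat -> nat, (forall j, (phi j < phi (S j))%nat) /\
      exists L : seqC, in_linf L /\
        is_lim_seq (fun j => norminf (fun k => (Op (b (phi j)) k - L k)%C)) 0.

(* Main.v *)
Require Import Defs.
From Stdlib Require Import Reals Lra Lia ClassicalEpsilon Classical FunctionalExtensionality.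
From Coquelicot Require Import Coquelicot.
Open Scope R_scope.

Lemma exser_le (a b : nat -> R) : (forall n, Rabs (a n) <= b n) -> ex_series b -> ex_series a.
Proof. intros H Hb. apply (@ex_series_le R_AbsRing R_CompleteNormedModule _ b); [|exact Hb].
  intro n. exact (H n). Qed.

Lemma ser_bound (u v : nat -> R) :
  (forall n, Rabs (u n) <= v n) -> ex_series v ->
  ex_series u /\ Rabs (Series u) <= Series v.
Proof.
  intros H Hv.
  assert (Ha : ex_series (fun n => Rabs (u n))).
  { apply (exser_le _ v); [|exact Hv]. intro n. 
    rewrite Rabs_Rabsolu; apply H. }
  split. apply ex_series_Rabs; exact Ha.
  eapply Rle_trans. apply Series_Rabs; exact Ha.
  apply Series_le; [|exact Hv]. intro n; split; [apply Rabs_pos|apply H].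
Qed.

Lemma sum_n_const_after (u : nat -> R) N : (forall k, (N < k)%nat -> u k = 0) ->
  forall M, (N <= M)%nat -> sum_n u M = sum_n u N.
Proof. intros H M HM. induction HM. reflexivity.
  rewrite sum_Sn, IHHM, (H (S m)) by lia. change (sum_n u N + 0 = sum_n u N); ring. Qed.

Lemma is_series_fin (u : nat -> R) N : (forall k, (N < k)%nat -> u k = 0) -> is_series u (sum_n u N).
Proof.
  intro H. assert (L : is_lim_seq (sum_n u) (sum_n u N)).
  { apply (is_lim_seq_incr_n _ N). eapply is_lim_seq_ext; [|apply is_lim_seq_const].
    intro n. symmetry. apply sum_n_const_after; [exact H|lia]. }
  exact L.
Qed.

Definition tl (u : nat -> R) K := fun k => if (k <=? K)%nat then 0 else u k.

Lemma tl_is_series u K : ex_series u -> is_series (tl u K) (Series u - sum_n u K).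
Proof.
  intro Hu.
  assert (H1 := Series_correct _ Hu).
  assert (H2 : is_series (fun k => if (k <=? K)%nat then u k else 0) (sum_n u K)).
  { replace (sum_n u K) with (sum_n (fun k => if (k <=? K)%nat then u k else 0) K).
    apply is_series_fin. intros k Hk. destruct (Nat.leb_spec k K); [lia|reflexivity].
    apply sum_n_ext_loc. intros n Hn. destruct (Nat.leb_spec n K); [reflexivity|lia]. }
  generalize (is_series_minus _ _ _ _ H1 H2).
  apply is_series_ext. intro k. unfold tl.
  destruct (Nat.leb_spec k K); unfold plus, opp; simpl; ring.
Qed.

Lemma tl_series u K : ex_series u -> Series (tl u K) = Series u - sum_n u K.
Proof. intro; apply is_series_unique, tl_is_series; auto. Qed.

Lemma tl_lim u : ex_series u -> is_lim_seq (fun K => Series u - sum_n u K) 0.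
Proof.
  intro Hu. replace (Finite 0) with (Finite (Series u - Series u)) by (f_equal; ring).
  apply is_lim_seq_minus'. apply is_lim_seq_const.
  exact (Series_correct _ Hu).
Qed.


Lemma exser_scal (a : nat -> R) r : ex_series a -> ex_series (fun n => r * a n).
Proof. intros [l Hl]. exists (r * l). apply (is_series_scal_l r) in Hl. exact Hl. Qed.

Lemma fin_exch (f : nat -> nat -> R) K :
  (forall k, ex_series (fun n => f n k)) ->
  ex_series (fun n => sum_n (f n) K) /\
  Series (fun n => sum_n (f n) K) = sum_n (fun k => Series (fun n => f n k)) K.
Proof.
  intro H. induction K.
  - split. eapply ex_series_ext; [|apply (H 0%nat)]. intro n; rewrite sum_O; reflexivity.
    rewrite sum_O. apply Series_ext. intro n; apply sum_O.
  - destruct IHK as [E HS].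
    assert (Hext : forall n, sum_n (f n) K + f n (S K) = sum_n (f n) (S K)) by (intro; rewrite sum_Sn; reflexivity).
    split. eapply ex_series_ext. exact Hext. apply (@ex_series_plus R_AbsRing R_NormedModule); auto.
    rewrite <- (Series_ext _ _ Hext), Series_plus by auto. rewrite sum_Sn, HS. reflexivity.
Qed.

Lemma fubini (f : nat -> nat -> R) (c e : nat -> R) :
  (forall n, 0 <= c n) -> (forall k, 0 <= e k) ->
  (forall n k, Rabs (f n k) <= c n * e k) -> ex_series c -> ex_series e ->
  ex_series (fun n => Series (fun k => f n k)) /\
  is_series (fun k => Series (fun n => f n k)) (Series (fun n => Series (fun k => f n k))).
Proof.
  intros Hc He Hf Ec Ee.
  assert (Ek : forall k, ex_series (fun n => f n k)).
  { intro k. apply (exser_le _ (fun n => c n * e k)). intro; apply Hf.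
    eapply ex_series_ext. intro n; apply Rmult_comm. apply exser_scal; auto. }
  assert (En : forall n, ex_series (fun k => f n k)).
  { intro n. apply (exser_le _ (fun k => c n * e k)). intro; apply Hf.
    apply exser_scal; auto. }
  assert (Bn : forall n, Rabs (Series (fun k => f n k)) <= c n * Series e).
  { intro n. rewrite <- Series_scal_l. apply ser_bound; [intro; apply Hf | apply exser_scal; auto]. }
  assert (EN : ex_series (fun n => Series (fun k => f n k))).
  { apply (exser_le _ (fun n => c n * Series e)); auto.
    eapply ex_series_ext; [intro; apply Rmult_comm|]; apply exser_scal; auto. }
  split; [exact EN|].
  set (L := Series (fun n => Series (fun k => f n k))).
  set (b := fun K => Series c * (Series e - sum_n e K)).
  assert (Hb : is_lim_seq b 0).
  { unfold b. replace (Finite 0) with (Rbar_mult (Series c) 0) by (simpl; f_equal; ring).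
    apply is_lim_seq_scal_l. apply tl_lim; auto. }
  assert (Hd : forall K, Rabs (L - sum_n (fun k => Series (fun n => f n k)) K) <= b K).
  { intro K. destruct (fin_exch f K Ek) as [E1 E2]. rewrite <- E2. unfold L.
    rewrite <- Series_minus by auto.
    rewrite (Series_ext _ (fun n => Series (tl (f n) K))).
    2:{ intro n. rewrite tl_series by auto. reflexivity. }
    unfold b. rewrite <- (Series_scal_r (Series e - sum_n e K) c).
    apply ser_bound.
    2:{ eapply ex_series_ext; [intro; apply Rmult_comm|]; apply exser_scal; auto. }
    intro n.
    assert (T : Series (tl (fun k => c n * e k) K) = c n * (Series e - sum_n e K)).
    { rewrite tl_series by (apply exser_scal; auto). rewrite Series_scal_l.
      rewrite (sum_n_mult_l (K := R_Ring)). change (mult (c n) (sum_n e K)) with (c n * sum_n e K). ring. }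
    rewrite <- T. apply ser_bound.
    - intro k. unfold tl. destruct (Nat.leb_spec k K). rewrite Rabs_R0; lra. apply Hf.
    - eexists. apply tl_is_series. apply exser_scal; auto. }
  assert (Hz : is_lim_seq (fun K => L - sum_n (fun k => Series (fun n => f n k)) K) 0).
  { apply (is_lim_seq_le_le (fun K => - b K) _ b).
    - intro K. specialize (Hd K).
      set (x := L - sum_n (fun k => Series (fun n => f n k)) K) in *.
      pose proof (Rle_abs x). pose proof (Rle_abs (-x)). rewrite Rabs_Ropp in *. lra.
    - generalize (proj1 (is_lim_seq_opp b (Finite 0)) Hb). simpl. rewrite Ropp_0. auto.
    - exact Hb. }
  assert (HL : is_lim_seq (sum_n (fun k => Series (fun n => f n k))) L).
  { eapply is_lim_seq_ext.
    2:{ replace (Finite L) with (Finite (L - 0)) by (f_equal; ring).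
        apply is_lim_seq_minus'. apply is_lim_seq_const. exact Hz. }
    intro K; simpl; ring. }
  exact HL.
Qed.


Lemma fst_le_Cmod (c : C) : Rabs (fst c) <= Cmod c.
Proof. eapply Rle_trans; [apply Rmax_l|apply Rmax_Cmod]. Qed.
Lemma snd_le_Cmod (c : C) : Rabs (snd c) <= Cmod c.
Proof. eapply Rle_trans; [apply Rmax_r|apply Rmax_Cmod]. Qed.

Lemma Cmod_le_sum (c : C) : Cmod c <= Rabs (fst c) + Rabs (snd c).
Proof.
  destruct c as [a b]. unfold Cmod; simpl.
  rewrite <- (sqrt_Rsqr (Rabs a + Rabs b)) by (generalize (Rabs_pos a) (Rabs_pos b); lra).
  apply sqrt_le_1_alt. unfold Rsqr.

  generalize (pow2_abs a) (pow2_abs b) (Rabs_pos a) (Rabs_pos b); simpl; intros; nra.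
Qed.

Lemma fst_RCmult r (c : C) : fst (RtoC r * c)%C = r * fst c.
Proof. destruct c; simpl; ring. Qed.
Lemma snd_RCmult r (c : C) : snd (RtoC r * c)%C = r * snd c.
Proof. destruct c; simpl; ring. Qed.

Lemma Cseries_bound (v : seqC) (g : nat -> R) :
  (forall n, Cmod (v n) <= g n) -> ex_series g ->
  ex_series (fun n => fst (v n)) /\ ex_series (fun n => snd (v n)) /\
  Rabs (fst (Cseries v)) <= Series g /\ Rabs (snd (Cseries v)) <= Series g /\
  Cmod (Cseries v) <= 2 * Series g.
Proof.
  intros H Hg.
  destruct (ser_bound (fun n => fst (v n)) g) as [E1 B1]; auto.
  { intro n; eapply Rle_trans; [apply fst_le_Cmod|apply H]. }
  destruct (ser_bound (fun n => snd (v n)) g) as [E2 B2]; auto.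
  { intro n; eapply Rle_trans; [apply snd_le_Cmod|apply H]. }
  unfold Cseries; simpl. repeat split; auto.
  eapply Rle_trans; [apply Cmod_le_sum|]. simpl. lra.
Qed.

Lemma norminf_bound (a : seqC) B : (forall n, Cmod (a n) <= B) -> 0 <= norminf a <= B.
Proof.
  intro H. unfold norminf.
  assert (h1 : Rbar_le (Cmod (a 0%nat)) (Sup_seq (fun n => Finite (Cmod (a n))))).
  { apply (Sup_seq_minor_le _ _ 0%nat). simpl. lra. }
  assert (h2 : Rbar_le (Sup_seq (fun n => Finite (Cmod (a n)))) B).
  { apply Rbar_not_lt_le. intro Hl. apply Sup_seq_minor_lt in Hl.
    destruct Hl as [n Hn]. simpl in Hn. specialize (H n). lra. }
  destruct (Sup_seq (fun n => Finite (Cmod (a n)))); simpl in *; try contradiction.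
  generalize (Cmod_ge_0 (a 0%nat)); lra.
Qed.

Definition ev (n : nat) : seqC := fun m => if Nat.eqb n m then RtoC 1 else RtoC 0.

Ltac cring q := repeat match goal with |- context [q ?i] => destruct (q i) end;
  unfold Cmult, Cplus, RtoC; simpl; f_equal; ring.

Lemma sum_ev (q : nat -> C) k N :
  sum_n (fun n => (q n * ev n k)%C) N = if (k <=? N)%nat then q k else RtoC 0.
Proof.
  unfold ev. induction N.
  - rewrite sum_O. destruct (Nat.eqb_spec 0 k); destruct (Nat.leb_spec k 0); subst;
      try lia; cring q.
  - rewrite sum_Sn, IHN. change (plus ?a ?b) with (Cplus a b).
    destruct (Nat.eqb_spec (S N) k); destruct (Nat.leb_spec k N); destruct (Nat.leb_spec k (S N)); subst; try lia.
    all: cring q.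
Qed.

Lemma sum_ev_R n N :
  sum_n (fun m => Cmod (ev n m)) N = if (n <=? N)%nat then 1 else 0.
Proof.
  unfold ev. induction N.
  - rewrite sum_O. destruct (Nat.eqb_spec n 0); destruct (Nat.leb_spec n 0); subst; try lia.
    apply Cmod_1. apply Cmod_0.
  - rewrite sum_Sn, IHN. change (plus ?a ?b) with (Rplus a b).
    destruct (Nat.eqb_spec n (S N)); destruct (Nat.leb_spec n N); destruct (Nat.leb_spec n (S N)); subst; try lia.
    all: try rewrite Cmod_1; try rewrite Cmod_0; unfold plus; simpl; lra.
Qed.

Lemma ev_norm1 n : in_l1 (ev n) /\ norm1 (ev n) = 1.
Proof.
  assert (H : is_series (fun m => Cmod (ev n m)) 1).
  { replace 1 with (sum_n (fun m => Cmod (ev n m)) n).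
    apply is_series_fin. intros k Hk. unfold ev. destruct (Nat.eqb_spec n k). lia. apply Cmod_0.
    rewrite sum_ev_R. destruct (Nat.leb_spec n n); [reflexivity|lia]. }
  split. exists 1; exact H. apply is_series_unique; exact H.
Qed.

Lemma nuc_gen (T : seqC -> seqC) (x : nat -> seqC) (B : nat -> R) :
  (forall n m, Cmod (x n m) <= B n) -> ex_series B ->
  (forall a, in_l1 a -> forall n, T a n = pairing a (x n)) -> nuclear_l1 T.
Proof.
  intros HB EB HT. exists x, ev.
  split. { intro n; exists (B n); auto. }
  split. { intro n; apply ev_norm1. }
  split.
  { apply (exser_le _ B); auto. intro n. rewrite (proj2 (ev_norm1 n)), Rmult_1_r.
    destruct (norminf_bound (x n) (B n) (HB n)). rewrite Rabs_pos_eq; lra. }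
  intros a Ha.
  assert (Hb : forall k, Cmod (T a k) <= 2 * norm1 a * B k).
  { intro k. rewrite HT by auto. unfold pairing.
    destruct (Cseries_bound (fun n => (a n * x k n)%C) (fun n => B k * Cmod (a n))) as (_&_&_&_&H).
    - intro n. rewrite Cmod_mult. rewrite Rmult_comm. apply Rmult_le_compat_r. apply Cmod_ge_0. auto.
    - apply exser_scal; exact Ha.
    - rewrite Series_scal_l in H. unfold norm1. lra. }
  assert (E : in_l1 (T a)).
  { apply (exser_le _ (fun k => 2 * norm1 a * B k)). intro k. rewrite Rabs_pos_eq by apply Cmod_ge_0. auto.
    apply exser_scal; auto. }
  split; [exact E|].
  eapply is_lim_seq_ext; [|apply (tl_lim _ E)].
  intro N. unfold norm1. rewrite <- tl_series by exact E. apply Series_ext. intro k.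
  rewrite sum_ev. unfold tl. destruct (Nat.leb_spec k N).
  - rewrite <- HT by auto. replace (T a k - T a k)%C with (RtoC 0). now rewrite Cmod_0.
    destruct (T a k); unfold Cminus, Cplus, Copp, RtoC; simpl; f_equal; ring.
  - replace (T a k - 0)%C with (T a k). reflexivity.
    destruct (T a k); unfold Cminus, Cplus, Copp, RtoC; simpl; f_equal; ring.
Qed.


Fixpoint build (g : nat -> nat -> nat) j := match j with O => g O O | S j' => g (build g j') j end.

Lemma inv_lim : is_lim_seq (fun j => / INR (S j)) 0.
Proof.
  assert (H : is_lim_seq (fun j => INR (S j)) p_infty).
  { apply (is_lim_seq_incr_1 INR). apply is_lim_seq_INR. }
  apply is_lim_seq_inv in H; [|discriminate]. exact H.
Qed.

Lemma extract (u : nat -> R) B : (forall n, Rabs (u n) <= B) ->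
  exists psi (l : R), (forall j, (psi j < psi (S j))%nat) /\ is_lim_seq (fun j => u (psi j)) l.
Proof.
  intro HB.
  destruct (Rtopology.Bolzano_Weierstrass u (fun c => -B <= c <= B)) as [l Hl].
  { apply Rtopology.compact_P3. }
  { intro n. apply Rabs_le_between, HB. }
  assert (Cl : forall N j, exists p, (N < p)%nat /\ Rabs (u p - l) < / INR (S j)).
  { intros N j. assert (P : 0 < / INR (S j)) by (apply Rinv_0_lt_compat, lt_0_INR; lia).
    destruct (Hl (fun y => Rabs (y - l) < / INR (S j)) (S N)) as [p [Hp1 Hp2]].
    - exists (mkposreal _ P). intros y Hy. exact Hy.
    - exists p; split; [lia|exact Hp2]. }
  set (g := fun N j => proj1_sig (constructive_indefinite_description _ (Cl N j))).
  assert (Hg : forall N j, (N < g N j)%nat /\ Rabs (u (g N j) - l) < / INR (S j)).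
  { intros N j. unfold g. destruct (constructive_indefinite_description _ (Cl N j)); simpl; auto. }
  exists (build g), l. split.
  - intro j. simpl. apply Hg.
  - assert (Hb : forall j, Rabs (u (build g j) - l) < / INR (S j)).
    { intro j; destruct j; simpl; apply Hg. }
    apply (is_lim_seq_le_le (fun j => l - / INR (S j)) _ (fun j => l + / INR (S j))).
    + intro j. specialize (Hb j). apply Rabs_def2 in Hb. lra.
    + replace (Finite l) with (Finite (l - 0)) by (f_equal; ring).
      apply is_lim_seq_minus'. apply is_lim_seq_const. apply inv_lim.
    + replace (Finite l) with (Finite (l + 0)) by (f_equal; ring).
      apply is_lim_seq_plus'. apply is_lim_seq_const. apply inv_lim.
Qed.

Definition SI (f : nat -> nat) := forall j, (f j < f (S j))%nat.

Lemma SI_lt f : SI f -> forall a b, (a < b)%nat -> (f a < f b)%nat.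
Proof. intros H a b Hab. induction Hab. apply H. specialize (H m). lia. Qed.
Lemma SI_ge f : SI f -> forall j, (j <= f j)%nat.
Proof. intros H j. induction j. lia. specialize (H j). lia. Qed.
Lemma SI_comp f g : SI f -> SI g -> SI (fun j => f (g j)).
Proof. intros Hf Hg j. apply SI_lt; auto. Qed.

Definition Good (u : nat -> R) (psi : nat -> nat) :=
  SI psi /\ ((exists B, forall j, Rabs (u j) <= B) -> exists l : R, is_lim_seq (fun j => u (psi j)) l).

Lemma exGood u : exists psi, Good u psi.
Proof.
  destruct (classic (exists B, forall j, Rabs (u j) <= B)) as [[B HB]|HN].
  - destruct (extract u B HB) as (psi & l & H1 & H2). exists psi. split; auto. intros _; exists l; auto.
  - exists (fun j => j). split. intro; lia. intro; contradiction.
Qed.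

Definition Ex (u : nat -> R) : nat -> nat := proj1_sig (constructive_indefinite_description _ (exGood u)).
Lemma ExGood u : Good u (Ex u).
Proof. unfold Ex. destruct (constructive_indefinite_description _ (exGood u)); simpl; auto. Qed.

Fixpoint Phi (w : nat -> nat -> R) m : nat -> nat :=
  match m with O => Ex (w O) | S m' => fun j => Phi w m' (Ex (fun i => w m (Phi w m' i)) j) end.
Fixpoint Rho (w : nat -> nat -> R) m p : nat -> nat :=
  match p with O => fun j => j | S p' => fun j => Rho w m p' (Ex (fun i => w (S (m + p')) (Phi w (m + p') i)) j) end.

Lemma Phi_Rho w m p j : Phi w (m + p) j = Phi w m (Rho w m p j).
Proof.
  revert j. induction p; intro j.
  - rewrite Nat.add_0_r. reflexivity.
  - rewrite Nat.add_succ_r. simpl. rewrite IHp. reflexivity.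
Qed.

Lemma SI_Phi w m : SI (Phi w m).
Proof. induction m; simpl. apply ExGood. apply SI_comp; auto. apply ExGood. Qed.
Lemma SI_Rho w m p : SI (Rho w m p).
Proof. induction p; simpl. intro; lia. apply SI_comp; auto. apply ExGood. Qed.

Lemma diag (w : nat -> nat -> R) : (forall m, exists B, forall j, Rabs (w m j) <= B) ->
  exists phi, SI phi /\ forall m, exists l : R, is_lim_seq (fun j => w m (phi j)) l.
Proof.
  intro HB. exists (fun j => Phi w j j). split.
  - intro j. simpl. apply SI_lt. apply SI_Phi.
    generalize (SI_ge _ (proj1 (ExGood (fun i => w (S j) (Phi w j i)))) (S j)). lia.
  - intro m.
    assert (C0 : exists l : R, is_lim_seq (fun j => w m (Phi w m j)) l).
    { destruct m; simpl.
      - apply (proj2 (ExGood (w O))). apply HB.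
      - apply (proj2 (ExGood (fun i => w (S m) (Phi w m i)))).
        destruct (HB (S m)) as [B HB']. exists B; intro; apply HB'. }
    destruct C0 as [l Hl]. exists l.
    apply (is_lim_seq_incr_n _ m).
    set (r := fun p => Rho w m p (m + p)).
    assert (Sr : SI r).
    { intro p. unfold r. simpl. apply SI_lt. apply SI_Rho.
      generalize (SI_ge _ (proj1 (ExGood (fun i => w (S (m + p)) (Phi w (m + p) i)))) (m + S p)). lia. }
    eapply is_lim_seq_ext.
    2:{ apply (is_lim_seq_subseq (fun j => w m (Phi w m j)) l r). apply eventually_subseq; exact Sr. exact Hl. }
    intro p. simpl. unfold r. rewrite (Nat.add_comm p m), Phi_Rho. reflexivity.
Qed.


Section M.
Variable mu : nat -> R.
Hypothesis Hpos : forall n, 0 < mu n.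
Hypothesis Hmono : forall n, mu (S n) <= mu n.
Hypothesis Hsum : ex_series mu.

Lemma mono k n : mu (k + n) <= mu n.
Proof. induction k. simpl; lra. simpl. eapply Rle_trans; [apply Hmono|exact IHk]. Qed.
Lemma mono' n k : mu (n + k) <= mu n.
Proof. rewrite Nat.add_comm; apply mono. Qed.
Lemma mono'' n k : mu (n + k) <= mu k.
Proof. apply mono. Qed.

Lemma H_nuclear : nuclear_l1 (Hmu mu).
Proof.
  apply (nuc_gen _ (fun k n => RtoC (mu (n + k))) mu); auto.
  - intros n m. rewrite Cmod_R, Rabs_pos_eq by (generalize (Hpos (m+n)); lra). apply mono.
  - intros a Ha n. unfold Hmu, pairing. f_equal. apply functional_extensionality; intro; apply Cmult_comm.
Qed.

Lemma fst_sum_n (p : seqC) N : fst (sum_n p N) = sum_n (fun n => fst (p n)) N.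
Proof. induction N. rewrite !sum_O; reflexivity. rewrite !sum_Sn, <- IHN. reflexivity. Qed.
Lemma snd_sum_n (p : seqC) N : snd (sum_n p N) = sum_n (fun n => snd (p n)) N.
Proof. induction N. rewrite !sum_O; reflexivity. rewrite !sum_Sn, <- IHN. reflexivity. Qed.

Lemma Cseries_fin (p : seqC) k : (forall n, (k < n)%nat -> p n = RtoC 0) -> Cseries p = sum_n p k.
Proof.
  intro H. unfold Cseries. apply injective_projections.
  - change (Series (fun n => fst (p n)) = fst (sum_n p k)). rewrite fst_sum_n.
    apply is_series_unique, is_series_fin. intros; rewrite H by lia; reflexivity.
  - change (Series (fun n => snd (p n)) = snd (sum_n p k)). rewrite snd_sum_n.
    apply is_series_unique, is_series_fin. intros; rewrite H by lia; reflexivity.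
Qed.

Lemma C_nuclear : nuclear_l1 (Cesmu mu).
Proof.
  apply (nuc_gen _ (fun k n => if (n <=? k)%nat then RtoC (mu k) else RtoC 0) mu); auto.
  - intros n m. destruct (Nat.leb_spec m n).
    rewrite Cmod_R, Rabs_pos_eq by (generalize (Hpos n); lra). lra.
    rewrite Cmod_0. generalize (Hpos n); lra.
  - intros a Ha n. unfold Cesmu, pairing. rewrite (Cseries_fin _ n).
    + rewrite <- (sum_n_mult_l (K := C_Ring)). apply sum_n_ext_loc. intros m Hm.
      destruct (Nat.leb_spec m n); [|lia]. change (mult ?x ?y) with (Cmult x y). apply Cmult_comm.
    + intros m Hm. destruct (Nat.leb_spec m n); [lia|]. apply Cmult_0_r.
Qed.


Lemma GL (al be A : nat -> R) M :
  (forall n, Rabs (al n) <= A n) -> ex_series A -> (forall k, Rabs (be k) <= M) ->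
  ex_series (fun k => Series (fun n => mu (n+k) * al n) * be k) /\
  ex_series (fun n => al n * Series (fun k => mu (k+n) * be k)) /\
  Series (fun k => Series (fun n => mu (n+k) * al n) * be k) =
  Series (fun n => al n * Series (fun k => mu (k+n) * be k)).
Proof.
  intros HA EA HM.
  assert (M0 : 0 <= M) by (generalize (Rabs_pos (be 0%nat)) (HM 0%nat); lra).
  destruct (fubini (fun n k => mu (n+k) * al n * be k) (fun n => A n * M) mu) as [E1 E2].
  - intro n. generalize (Rabs_pos (al n)) (HA n); intros; nra.
  - intro k; generalize (Hpos k); lra.
  - intros n k. rewrite !Rabs_mult, Rabs_pos_eq by (generalize (Hpos (n+k)); lra).
    generalize (mono'' n k) (Hpos (n+k)) (HA n) (HM k) (Rabs_pos (al n)) (Rabs_pos (be k)); intros.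
    assert (mu (n+k) * Rabs (al n) <= mu k * A n).
    { apply Rmult_le_compat; lra. }
    replace (A n * M * mu k) with ((mu k * A n) * M) by ring.
    apply Rmult_le_compat; try lra. apply Rmult_le_pos; lra.
  - eapply ex_series_ext; [intro; apply Rmult_comm|]. apply exser_scal; auto.
  - exact Hsum.
  - assert (L : forall k, Series (fun n => mu (n+k) * al n) * be k = Series (fun n => mu (n+k) * al n * be k)).
    { intro k. rewrite <- Series_scal_r. reflexivity. }
    assert (R' : forall n, al n * Series (fun k => mu (k+n) * be k) = Series (fun k => mu (n+k) * al n * be k)).
    { intro n. rewrite <- Series_scal_l. apply Series_ext. intro k. rewrite Nat.add_comm. ring. }
    rewrite (Series_ext _ _ L), (Series_ext _ _ R').
    split. eapply ex_series_ext. intro k; symmetry; apply L. eexists; exact E2.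
    split. eapply ex_series_ext. intro k; symmetry; apply R'. exact E1.
    apply is_series_unique; exact E2.
Qed.

Lemma Hmu_fst a k : fst (Hmu mu a k) = Series (fun n => mu (n+k) * fst (a n)).
Proof. unfold Hmu, Cseries; simpl. apply Series_ext; intro; apply fst_RCmult. Qed.
Lemma Hmu_snd a k : snd (Hmu mu a k) = Series (fun n => mu (n+k) * snd (a n)).
Proof. unfold Hmu, Cseries; simpl. apply Series_ext; intro; apply snd_RCmult. Qed.

Lemma linf_nonneg (b : seqC) M : (forall n, Cmod (b n) <= M) -> 0 <= M.
Proof. intro H. generalize (Cmod_ge_0 (b 0%nat)) (H 0%nat); lra. Qed.

Lemma Hmu_bound (b : seqC) M : (forall n, Cmod (b n) <= M) -> forall k,
  Rabs (fst (Hmu mu b k)) <= M * Series (fun n => mu (n + k)) /\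
  Rabs (snd (Hmu mu b k)) <= M * Series (fun n => mu (n + k)) /\
  Cmod (Hmu mu b k) <= 2 * (M * Series mu).
Proof.
  intros HM k. assert (M0 := linf_nonneg b M HM).
  assert (Ek : ex_series (fun n => mu (n + k))).
  { apply (ex_series_incr_n mu k) in Hsum. eapply ex_series_ext; [|exact Hsum]. intro n; simpl; rewrite Nat.add_comm; reflexivity. }
  destruct (Cseries_bound (fun n => (RtoC (mu (n+k)) * b n)%C) (fun n => M * mu (n + k))) as (_&_&H1&H2&_).
  { intro n. rewrite Cmod_mult, Cmod_R, Rabs_pos_eq by (generalize (Hpos (n+k)); lra).
    rewrite Rmult_comm. apply Rmult_le_compat_r. generalize (Hpos (n+k)); lra. auto. }
  { apply exser_scal; auto. }
  destruct (Cseries_bound (fun n => (RtoC (mu (n+k)) * b n)%C) (fun n => M * mu n)) as (_&_&_&_&H3).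
  { intro n. rewrite Cmod_mult, Cmod_R, Rabs_pos_eq by (generalize (Hpos (n+k)); lra).
    generalize (mono' n k) (Hpos (n+k)) (HM n) (Cmod_ge_0 (b n)); intros.
    rewrite Rmult_comm. apply Rmult_le_compat; lra. }
  { apply exser_scal; auto. }
  rewrite Series_scal_l in H1, H2, H3. unfold Hmu. auto.
Qed.

Lemma H_adjoint : adjoint_l1_linf (Hmu mu) (Hmu mu).
Proof.
  split.
  { intros b [M HM]. exists (2 * (M * Series mu)). intro k. apply (Hmu_bound b M HM). }
  intros a b Ha [M HM].
  assert (Aa : forall n, Rabs (fst (a n)) <= Cmod (a n)) by (intro; apply fst_le_Cmod).
  assert (Ab : forall n, Rabs (snd (a n)) <= Cmod (a n)) by (intro; apply snd_le_Cmod).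
  assert (Ba : forall n, Rabs (fst (b n)) <= M) by (intro n; eapply Rle_trans; [apply fst_le_Cmod|apply HM]).
  assert (Bb : forall n, Rabs (snd (b n)) <= M) by (intro n; eapply Rle_trans; [apply snd_le_Cmod|apply HM]).
  destruct (GL _ _ _ M Aa Ha Ba) as (E1&F1&G1).
  destruct (GL _ _ _ M Aa Ha Bb) as (E2&F2&G2).
  destruct (GL _ _ _ M Ab Ha Ba) as (E3&F3&G3).
  destruct (GL _ _ _ M Ab Ha Bb) as (E4&F4&G4).
  unfold pairing, Cseries. apply injective_projections.
  - change (Series (fun k => fst (Hmu mu a k * b k)%C) = Series (fun n => fst (a n * Hmu mu b n)%C)).
    rewrite (Series_ext (fun k => fst (Hmu mu a k * b k)%C)
      (fun k => Series (fun n => mu (n+k) * fst (a n)) * fst (b k) - Series (fun n => mu (n+k) * snd (a n)) * snd (b k))).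
    2:{ intro k. rewrite <- Hmu_fst, <- Hmu_snd. reflexivity. }
    rewrite (Series_ext (fun n => fst (a n * Hmu mu b n)%C)
      (fun n => fst (a n) * Series (fun k => mu (k+n) * fst (b k)) - snd (a n) * Series (fun k => mu (k+n) * snd (b k)))).
    2:{ intro n. rewrite <- Hmu_fst, <- Hmu_snd. reflexivity. }
    rewrite !Series_minus by auto. rewrite G1, G4. reflexivity.
  - change (Series (fun k => snd (Hmu mu a k * b k)%C) = Series (fun n => snd (a n * Hmu mu b n)%C)).
    rewrite (Series_ext (fun k => snd (Hmu mu a k * b k)%C)
      (fun k => Series (fun n => mu (n+k) * fst (a n)) * snd (b k) + Series (fun n => mu (n+k) * snd (a n)) * fst (b k))).
    2:{ intro k. rewrite <- Hmu_fst, <- Hmu_snd. reflexivity. }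
    rewrite (Series_ext (fun n => snd (a n * Hmu mu b n)%C)
      (fun n => fst (a n) * Series (fun k => mu (k+n) * snd (b k)) + snd (a n) * Series (fun k => mu (k+n) * fst (b k)))).
    2:{ intro n. rewrite <- Hmu_fst, <- Hmu_snd. reflexivity. }
    rewrite !Series_plus by auto. rewrite G2, G3. reflexivity.
Qed.


Lemma T_lim : is_lim_seq (fun k => Series (fun n => mu (n + k))) 0.
Proof.
  apply is_lim_seq_incr_1.
  eapply is_lim_seq_ext; [|apply (tl_lim _ Hsum)].
  intro K. simpl. rewrite (Series_incr_n mu (S K)) by (lia || exact Hsum).
  rewrite sum_n_Reals. simpl (Init.Nat.pred (S K)).
  rewrite (Series_ext (fun k => mu (S K + k)) (fun n => mu (n + S K))) by (intro; f_equal; lia).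
  ring.
Qed.

Lemma limbound u (l : R) Cc : is_lim_seq u l -> (forall j, Rabs (u j) <= Cc) -> Rabs l <= Cc.
Proof.
  intros H Hb. apply is_lim_seq_abs in H.
  generalize (is_lim_seq_le _ _ _ _ Hb H (is_lim_seq_const Cc)). simpl. auto.
Qed.

Lemma ev_fin (P : nat -> nat -> Prop) K : (forall k, (k < K)%nat -> eventually (P k)) ->
  eventually (fun j => forall k, (k < K)%nat -> P k j).
Proof.
  induction K; intro H.
  - exists O. intros; lia.
  - generalize (@filter_and nat eventually _ _ _ (IHK (fun k Hk => H k ltac:(lia))) (H K ltac:(lia))).
    apply (@filter_imp nat eventually _). intros j [H1 H2] k Hk. destruct (Nat.eq_dec k K). subst; auto. apply H1; lia.
Qed.

Lemma fst_Cminus (x y : C) : fst (x - y)%C = fst x - fst y.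
Proof. destruct x, y; simpl; ring. Qed.
Lemma snd_Cminus (x y : C) : snd (x - y)%C = snd x - snd y.
Proof. destruct x, y; simpl; ring. Qed.

Lemma H_compact : compact_linf (Hmu mu).
Proof.
  split.
  { intros b [M HM]. exists (2 * (M * Series mu)). intro k. apply (Hmu_bound b M HM). }
  intros b M HM.
  assert (M0 : 0 <= M) by (generalize (Cmod_ge_0 (b 0%nat 0%nat)) (HM 0%nat 0%nat); lra).
  set (T := fun k => Series (fun n => mu (n + k))).
  assert (Bd : forall j k, Rabs (fst (Hmu mu (b j) k)) <= M * T k /\ Rabs (snd (Hmu mu (b j) k)) <= M * T k).
  { intros j k. destruct (Hmu_bound (b j) M (HM j) k) as (h1&h2&_). auto. }
  destruct (diag (fun k j => fst (Hmu mu (b j) k))) as [phi1 [S1 C1]].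
  { intro k. exists (M * T k). intro j. apply Bd. }
  destruct (diag (fun k j => snd (Hmu mu (b (phi1 j)) k))) as [phi2 [S2 C2]].
  { intro k. exists (M * T k). intro j. apply Bd. }
  set (phi := fun j => phi1 (phi2 j)).
  exists phi. split. { apply (SI_comp phi1 phi2); auto. }
  assert (Lr : forall k, is_lim_seq (fun j => fst (Hmu mu (b (phi j)) k)) (real (Lim_seq (fun j => fst (Hmu mu (b (phi j)) k))))).
  { intro k. destruct (C1 k) as [l Hl].
    assert (H' : is_lim_seq (fun j => fst (Hmu mu (b (phi j)) k)) l).
    { exact (is_lim_seq_subseq _ l phi2 (eventually_subseq _ S2) Hl). }
    rewrite (is_lim_seq_unique _ _ H'). exact H'. }
  assert (Li : forall k, is_lim_seq (fun j => snd (Hmu mu (b (phi j)) k)) (real (Lim_seq (fun j => snd (Hmu mu (b (phi j)) k))))).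
  { intro k. destruct (C2 k) as [l Hl].
    change (is_lim_seq (fun j => snd (Hmu mu (b (phi j)) k)) l) in Hl.
    rewrite (is_lim_seq_unique _ _ Hl). exact Hl. }
  set (L := fun k => (real (Lim_seq (fun j => fst (Hmu mu (b (phi j)) k))),
                      real (Lim_seq (fun j => snd (Hmu mu (b (phi j)) k)))) : C).
  assert (LB : forall k, Rabs (fst (L k)) <= M * T k /\ Rabs (snd (L k)) <= M * T k).
  { intro k; split; simpl.
    - eapply limbound; [apply Lr|intro j; apply Bd].
    - eapply limbound; [apply Li|intro j; apply Bd]. }
  assert (TS : forall k, Rabs (T k) <= Series mu).
  { intro k. unfold T. rewrite <- (Rplus_0_r (Series (fun n => mu (n + k)))) at 1.
    replace (Series (fun n => mu (n + k)) + 0) with (Series (fun n => mu (n + k))) by ring.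
    apply ser_bound; auto. intro n. rewrite Rabs_pos_eq by (generalize (Hpos (n+k)); lra). apply mono'. }
  exists L. split.
  { exists (2 * (M * Series mu)). intro k. eapply Rle_trans; [apply Cmod_le_sum|].
    destruct (LB k) as [h1 h2]. generalize (TS k) (Rle_abs (T k)); intros.
    assert (M * T k <= M * Series mu) by (apply Rmult_le_compat_l; lra). lra. }
  apply is_lim_seq_spec. intro eps.
  set (c := 4 * M + 1).
  assert (cpos : 0 < c) by (unfold c; lra).
  assert (e2 : 0 < eps / (2 * c)) by (apply Rdiv_lt_0_compat; [apply cond_pos|lra]).
  assert (e4 : 0 < eps / 4) by (generalize (cond_pos eps); lra).
  destruct (proj2 (is_lim_seq_spec _ _) T_lim (mkposreal _ e2)) as [K0 HK0].
  assert (EV : eventually (fun j => forall k, (k < K0)%nat ->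
     Rabs (fst (Hmu mu (b (phi j)) k) - fst (L k)) < eps / 4 /\
     Rabs (snd (Hmu mu (b (phi j)) k) - snd (L k)) < eps / 4)).
  { apply ev_fin. intros k _.
    apply (@filter_and nat eventually _).
    - exact (proj2 (is_lim_seq_spec _ _) (Lr k) (mkposreal _ e4)).
    - exact (proj2 (is_lim_seq_spec _ _) (Li k) (mkposreal _ e4)). }
  revert EV. apply (@filter_imp nat eventually _). intros j Hj.
  destruct (norminf_bound (fun k => (Hmu mu (b (phi j)) k - L k)%C) (eps / 2)) as [N1 N2].
  { intro k. eapply Rle_trans; [apply Cmod_le_sum|]. rewrite fst_Cminus, snd_Cminus.
    destruct (Nat.lt_ge_cases k K0) as [Hk|Hk].
    - destruct (Hj k Hk). lra.
    - assert (HT := HK0 k ltac:(lia)). simpl in HT. rewrite Rminus_0_r in HT.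
      destruct (Bd (phi j) k) as [b1 b2]. destruct (LB k) as [l1 l2].
      generalize (Rabs_triang (fst (Hmu mu (b (phi j)) k)) (- fst (L k))).
      generalize (Rabs_triang (snd (Hmu mu (b (phi j)) k)) (- snd (L k))).
      rewrite !Rabs_Ropp. intros t1 t2.
      assert (MT : M * T k <= M * Rabs (T k)) by (apply Rmult_le_compat_l; [lra|apply Rle_abs]).
      assert (cT : c * Rabs (T k) < eps / 2).
      { apply (Rmult_lt_compat_l c) in HT; [|lra].
        replace (c * (eps / (2 * c))) with (eps / 2) in HT by (field; lra). exact HT. }
      unfold c in cT. generalize (Rabs_pos (T k)); intros. 
      unfold Rminus in *. nra. }
  rewrite Rminus_0_r, Rabs_pos_eq by lra. generalize (cond_pos eps); lra.
Qed.

End M.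


Theorem proposition29 (mu : nat -> R) :
  (forall n, 0 < mu n)%R ->
  (forall n, mu (S n) <= mu n)%R ->
  ex_series mu ->
  nuclear_l1 (Hmu mu) /\ nuclear_l1 (Cesmu mu) /\
  adjoint_l1_linf (Hmu mu) (Hmu mu) /\ compact_linf (Hmu mu).
Proof.
  intros Hp Hm Hs.
  split; [eapply H_nuclear; eauto|].
  split; [eapply C_nuclear; eauto|].
  split; [eapply H_adjoint; eauto|eapply H_compact; eauto].
Qed.
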